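(* Let $M_I$ be a prefactor system and $M$ a target for it, and let $M_{\bar I}$ be the resulting compactification (a prefactor system on $\bar I=I\cup\{top\}$). (1) If $M_I$ is stable and $M$ is maximal over $M_I$, then $M_{\bar I}$ is stable. (2) If $M_I$ is direct and $M$ is extensional over $M_I$, then $M_{\bar I}$ is direct, and for every $a\in M$ the set $I_a$ contains a non-empty upward closed subset of $I$. (3) If $M_I$ is inverse and $M$ is maximal over $M_I$, then $M_{\bar I}$ is inverse, and $I_a=I$ for every $a\in M$.
   Context: Let $(I,\le)$ be a non-empty directed preordered set and $\mathcal F(I)$ a family of subsets of $I$, each cofinal in $I$, closed under supersets and finite intersections, and containing all non-empty upward closed subsets. A system $(M_I,\triangleright)$: sets $M_i$ ($i\in I$, pairwise disjoint) with relations $\triangleright\subseteq M_{i'}\times M_i$ for $i\le i'$, reflexive for $i=i'$. $a_i\approx b_j$ iff some $c\in M_{i'}$, $i'\ge i,j$, has $c\triangleright a_i$ and $c\triangleright b_j$. Prefactor system: $a_{i'}\approx a_i\iff a_{i'}\triangleright a_i$ for $i\le i'$. Stable: $a_{i'}\triangleright a_i\approx b_i$ implies $a_{i'}\triangleright b_i$. $\approx$-embeddings: $\approx$-preserving maps $emb_{i,i'}:M_i\to M_{i'}$ with $emb_{i,i}(a)\approx a$, $emb_{i',i''}(emb_{i,i'}(a))\approx emb_{i,i''}(a)$; coherent if $a_{i'}\triangleright a_i\Rightarrow emb_{i',i''}(a_{i'})\triangleright a_i$ ($i\le i'\le i''$). $\approx$-projections: $\approx$-preserving maps $proj_{i',i}:M_{i'}\to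 M_i$ with $proj_{i,i}(a)\approx a$, $proj_{i',i}(proj_{i'',i'}(a))\approx proj_{i'',i}(a)$; coherent if $a_{i''}\triangleright a_i\Rightarrow proj_{i'',i'}(a_{i''})\triangleright a_i$. Direct: prefactor system with coherent $\approx$-embeddings such that $a_{i'}\triangleright a_i\iff a_{i'}\approx emb_{i,i'}(a_i)$. Inverse: prefactor system with coherent $\approx$-projections such that $a_{i'}\triangleright a_i\iff proj_{i',i}(a_{i'})\approx a_i$ (these notions make sense for any index set, in particular for $\bar I$). Target and compactification: a target for $M_I$ is a set $M$ with a relation $a\triangleright a_i$ between $a\in M$ and elements $a_i\in M_i$, such that $I_a:=\{i\in I\mid\exists a_i\in M_i,\ a\triangleright a_i\}\in\mathcal F(I)$ for all $a\in M$, and such that the compactification $M_{\bar I}$ — index set $\bar I=I\cup\{top\}$ with $top$ a new greatest element, $M_{top}=M$, the relation $\triangleright$ on $M\times M$ being equality — is again a prefactor system, i.e. $a\triangleright a_{i'}$ and $a\triangleright a_i$ imply $a_{i'}\triangleright a_i$ ($i\le i'$). If $M_I$ carries embeddings (resp. projections), the target additionally carries maps $Emb_i=emb_{i,top}:M_i\to M$ (resp. $Proj_i=proj_{top,i}:M\to M_i$) making $M_{\bar I}$ a prefactor system with coherent $\approx$-embeddings (resp. projections) extending those of $M_I$; in particular $Emb_{i'}(emb_{i,i'}(a_i))=Emb_i(a_i)$ and $a_{i'}\triangleright a_i\Rightarrow Emb_{i'}(a_{i'})\triangleright a_i$, resp. $proj_{i',i}(Proj_{i'}(a))\approx Proj_i(a)$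 and $a\triangleright a_i\Rightarrow Proj_{i'}(a)\triangleright a_i$ ($i\le i'$); here $Proj_i(a)$ may be taken as $proj_{i',i}(a_{i'})$ for any $i'\ge i$ with $a\triangleright a_{i'}$. A consistent set is $\alpha\subseteq\bigcup_iM_i$ with $a_{i'}\triangleright a_i$ for all its elements $a_{i'}\in M_{i'}$, $a_i\in M_i$, $i'\ge i$, and $\{i\mid\alpha\cap M_i\ne\emptyset\}\in\mathcal F(I)$. For $a\in M$, $Ext(a):=\{a_i\in\bigcup_iM_i\mid a\triangleright a_i\}$ (a consistent set). Two consistent sets $\alpha,\beta$ satisfy $\alpha\sim\beta$ iff $a_i\approx b_j$ for all $a_i\in\alpha$, $b_j\in\beta$. $M$ is maximal over $M_I$ iff $Ext(a)$ is an inclusion-maximal consistent set for every $a\in M$; $M$ is extensional over $M_I$ iff $Ext(a)\sim Ext(b)$ implies $a=b$. *)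

(* Defs.v *)
(** A system is a family of types [M j] (disjointness is automatic for a
    dependent family) with relations [R j' j : M j' -> M j -> Prop]
    (the relation |> , only ever used when [le j j']). *)
Section Generic.
Context {J : Type} (le : J -> J -> Prop) {M : J -> Type}
        (R : forall j' j, M j' -> M j -> Prop).

Definition is_system : Prop := forall j (a : M j), R j j a a.

Definition approx {i j} (a : M i) (b : M j) : Prop :=
  exists k, le i k /\ le j k /\ exists c : M k, R k i c a /\ R k j c b.

Definition prefactor : Prop :=
  forall i i', le i i' -> forall (a' : M i') (a : M i), approx a' a <-> R i' i a' a.

Definition stable : Prop :=
  forall i i', le i i' -> forall (a' : M i') (a b : M i),
    R i' i a' a -> approx a b -> R i' i a' b.

Definition is_emb (emb : forall i i', le i i' -> M i -> M i') : Prop :=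
  (forall i i' (h : le i i') (a b : M i), approx a b -> approx (emb i i' h a) (emb i i' h b)) /\
  (forall i (h : le i i) (a : M i), approx (emb i i h a) a) /\
  (forall i i' i'' (h1 : le i i') (h2 : le i' i'') (h3 : le i i'') (a : M i),
      approx (emb i' i'' h2 (emb i i' h1 a)) (emb i i'' h3 a)).

Definition coherent_emb (emb : forall i i', le i i' -> M i -> M i') : Prop :=
  forall i i' i'' (h1 : le i i') (h2 : le i' i'') (a' : M i') (a : M i),
    R i' i a' a -> R i'' i (emb i' i'' h2 a') a.

Definition direct_wrt (emb : forall i i', le i i' -> M i -> M i') : Prop :=
  prefactor /\ is_emb emb /\ coherent_emb emb /\
  (forall i i' (h : le i i') (a' : M i') (a : M i), R i' i a' a <-> approx a' (emb i i' h a)).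

Definition is_proj (proj : forall i i', le i i' -> M i' -> M i) : Prop :=
  (forall i i' (h : le i i') (a b : M i'), approx a b -> approx (proj i i' h a) (proj i i' h b)) /\
  (forall i (h : le i i) (a : M i), approx (proj i i h a) a) /\
  (forall i i' i'' (h1 : le i i') (h2 : le i' i'') (h3 : le i i'') (a : M i''),
      approx (proj i i' h1 (proj i' i'' h2 a)) (proj i i'' h3 a)).

Definition coherent_proj (proj : forall i i', le i i' -> M i' -> M i) : Prop :=
  forall i i' i'' (h1 : le i i') (h2 : le i' i'') (a'' : M i'') (a : M i),
    R i'' i a'' a -> R i' i (proj i' i'' h2 a'') a.

Definition inverse_wrt (proj : forall i i', le i i' -> M i' -> M i) : Prop :=
  prefactor /\ is_proj proj /\ coherent_proj proj /\
  (forall i i' (h : le i i') (a' : M i') (a : M i), R i' i a' a <-> approx (proj i i' h a') a).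

End Generic.

Definition upward_closed {I : Type} (le : I -> I -> Prop) (S : I -> Prop) : Prop :=
  forall i j, S i -> le i j -> S j.

Definition index_setting {I : Type} (le : I -> I -> Prop) (F : (I -> Prop) -> Prop) : Prop :=
  (forall i, le i i) /\ (forall i j k, le i j -> le j k -> le i k) /\
  inhabited I /\ (forall i j, exists k, le i k /\ le j k) /\
  (forall S, F S -> forall i, exists j, le i j /\ S j) /\
  (forall S S', F S -> (forall i, S i -> S' i) -> F S') /\
  (forall S S', F S -> F S' -> F (fun i => S i /\ S' i)) /\
  (forall S, (exists i, S i) -> upward_closed le S -> F S).

(** * The compactification  I-bar = I + {top}  (top = None) *)
Section Compactification.
Context {I : Type} (le : I -> I -> Prop) {M : I -> Type}
        (R : forall i' i, M i' -> M i -> Prop)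
        {T : Type} (RT : forall i, T -> M i -> Prop).

Definition le_bar (j j' : option I) : Prop :=
  match j, j' with
  | Some i, Some i' => le i i'
  | _, None => True
  | None, Some _ => False
  end.

Definition M_bar (j : option I) : Type :=
  match j with Some i => M i | None => T end.

Definition R_bar (j' j : option I) : M_bar j' -> M_bar j -> Prop :=
  match j', j return M_bar j' -> M_bar j -> Prop with
  | Some i', Some i => R i' i
  | None, Some i => RT i
  | None, None => fun a b => a = b
  | Some _, None => fun _ _ => False
  end.

Definition emb_bar (emb : forall i i', le i i' -> M i -> M i')
  (Emb : forall i, M i -> T) (j j' : option I) : le_bar j j' -> M_bar j -> M_bar j' :=
  match j, j' return le_bar j j' -> M_bar j -> M_bar j' with
  | Some i, Some i' => fun h a => emb i i' h a
  | Some i, None => fun _ a => Emb i a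
  | None, None => fun _ a => a
  | None, Some _ => fun h _ => match h with end
  end.

Definition proj_bar (proj : forall i i', le i i' -> M i' -> M i)
  (Proj : forall i, T -> M i) (j j' : option I) : le_bar j j' -> M_bar j' -> M_bar j :=
  match j, j' return le_bar j j' -> M_bar j' -> M_bar j with
  | Some i, Some i' => fun h a => proj i i' h a
  | Some i, None => fun _ a => Proj i a
  | None, None => fun _ a => a
  | None, Some _ => fun h _ => match h with end
  end.

Definition I_of (a : T) (i : I) : Prop := exists x : M i, RT i a x.

Definition is_target (F : (I -> Prop) -> Prop) : Prop :=
  (forall a, F (I_of a)) /\ prefactor le_bar R_bar.

Definition target_emb emb Emb : Prop :=
  is_emb le_bar R_bar (emb_bar emb Emb) /\ coherent_emb le_bar R_bar (emb_bar emb Emb).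

Definition target_proj proj Proj : Prop :=
  is_proj le_bar R_bar (proj_bar proj Proj) /\ coherent_proj le_bar R_bar (proj_bar proj Proj).

(** consistent sets: alpha is a predicate on the disjoint union *)
Definition consistent (F : (I -> Prop) -> Prop) (alpha : forall i, M i -> Prop) : Prop :=
  (forall i i', le i i' -> forall (a' : M i') (a : M i), alpha i' a' -> alpha i a -> R i' i a' a) /\
  F (fun i => exists a, alpha i a).

Definition Ext (a : T) : forall i, M i -> Prop := fun i x => RT i a x.

Definition sim (alpha beta : forall i, M i -> Prop) : Prop :=
  forall i j (a : M i) (b : M j), alpha i a -> beta j b -> approx le R a b.

Definition maximal (F : (I -> Prop) -> Prop) : Prop :=
  forall a, consistent F (Ext a) /\
    forall beta, consistent F beta -> (forall i x, Ext a i x -> beta i x) ->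
      forall i x, beta i x -> Ext a i x.

Definition extensional : Prop :=
  forall a b, sim (Ext a) (Ext b) -> a = b.

End Compactification.

(* Main.v *)
Require Import Defs.

Section H.
Variables (Idx : Type) (le : Idx -> Idx -> Prop) (F : (Idx -> Prop) -> Prop)
  (M : Idx -> Type) (R : forall i' i, M i' -> M i -> Prop)
  (T : Type) (RT : forall i, T -> M i -> Prop).
Hypothesis HI : index_setting le F.
Hypothesis Hsys : is_system R.
Hypothesis Hpre : prefactor le R.
Hypothesis Htar : is_target le R RT F.

Lemma h_refl : forall i, le i i.
Proof. apply HI. Qed.
Lemma h_trans : forall i j k, le i j -> le j k -> le i k.
Proof. apply HI. Qed.
Lemma h_upper : forall i j, exists k, le i k /\ le j k.
Proof. apply HI. Qed.
Lemma h_cof : forall (c : T) i, exists j (x : M j), le i j /\ RT j c x.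
Proof.
  intros c i. destruct HI as (_&_&_&_&Hc&_).
  destruct (Hc _ (proj1 Htar c) i) as [j [hij [x hx]]]. exists j, x. auto.
Qed.

Lemma h_B : forall c k m (x : M k) (y : M m), le k m -> RT m c y -> RT k c x -> R m k y x.
Proof.
  intros c k m x y hkm hy hx. destruct Htar as [_ Hp].
  apply (Hp (Some k) (Some m) hkm y x). exists None. simpl.
  split; [trivial|split;[trivial|]]. exists c. split; assumption.
Qed.

Lemma h_A : forall i j (a : M i) (b : M j),
  approx (le_bar le) (R_bar R RT) (i:=Some i) (j:=Some j) a b -> approx le R a b.
Proof.
  intros i j a b [k [hik [hjk [c [h1 h2]]]]]. destruct k as [k|].
  - exists k. simpl in *. eauto.
  - simpl in *. destruct (h_upper i j) as [u [hiu hju]].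
    destruct (h_cof c u) as [m [x [hum hx]]].
    exists m. split; [eapply h_trans; eauto|split;[eapply h_trans; eauto|]].
    exists x. split; eapply h_B; eauto; eapply h_trans; eauto.
Qed.

Lemma h_A' : forall i j (a : M i) (b : M j),
  approx le R a b -> approx (le_bar le) (R_bar R RT) (i:=Some i) (j:=Some j) a b.
Proof.
  intros i j a b [k [hik [hjk [c [h1 h2]]]]]. exists (Some k). simpl. eauto.
Qed.

Lemma h_top : forall (a b : T),
  approx (le_bar le) (R_bar R RT) (i:=None) (j:=None) a b -> a = b.
Proof.
  intros a b [k [hik [hjk [c [h1 h2]]]]]. destruct k as [k|]; simpl in *.
  - contradiction.
  - congruence.
Qed.

Lemma h_top' : forall (a : T), approx (le_bar le) (R_bar R RT) (i:=None) (j:=None) a a.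
Proof. intros a. exists None. simpl. eauto. Qed.

Lemma h_sym : forall q (u v : M q), R q q u v -> R q q v u.
Proof.
  intros q u v h. apply (Hpre q q (h_refl q)). exists q.
  split; [apply h_refl|split;[apply h_refl|]]. exists u. split; auto.
Qed.

Lemma h_tr : forall q (u v w : M q), R q q u v -> R q q v w -> R q q u w.
Proof.
  intros q u v w h1 h2. apply (Hpre q q (h_refl q)). exists q.
  split; [apply h_refl|split;[apply h_refl|]]. exists v. split; auto. apply h_sym; auto.
Qed.

Lemma h_asym : forall i j (a : M i) (b : M j), approx le R a b -> approx le R b a.
Proof. intros i j a b [k [h1 [h2 [c [h3 h4]]]]]. exists k. eauto. Qed.

Lemma h_max_add (Hmax : maximal le R RT F) : forall (c : T) i0 (a0 : M i0),
  (forall k (x : M k), RT k c x -> approx le R a0 x) -> RT i0 c a0.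
Proof.
  intros c i0 a0 Hx.
  destruct (Hmax c) as [[Hcons HF] Hm].
  set (beta := fun k (x : M k) => RT k c x \/ exists e : i0 = k, eq_rect i0 M a0 k e = x).
  refine (Hm beta _ _ i0 a0 _).
  - split.
    + intros i i' hii' x' x [h1|[e1 h1]] [h2|[e2 h2]].
      * apply (Hcons i i' hii' x' x h1 h2).
      * subst i. simpl in h2. subst x. apply (Hpre _ _ hii'). apply h_asym. apply Hx; auto.
      * subst i'. simpl in h1. subst x'. apply (Hpre _ _ hii'). apply Hx; auto.
      * subst i. subst i'. simpl in *. subst. apply Hsys.
    + destruct HI as (_&_&_&_&_&Hsup&_). apply (Hsup _ _ HF).
      intros i [x hx]. exists x. left. exact hx.
  - intros i x hx. left. exact hx.
  - right. exists eq_refl. reflexivity.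
Qed.


Lemma h_stable (Hst : stable le R) (Hmax : maximal le R RT F) :
  stable (le_bar le) (R_bar R RT).
Proof.
  intros j j' hjj' a' a b.
  destruct j as [i|]; destruct j' as [i'|]; simpl in *.
  - intros h1 h2. apply (Hst i i' hjj' a' a b h1). apply h_A; auto.
  - intros h1 h2. apply (h_max_add Hmax). intros k x hx.
    destruct (h_upper i k) as [u [hiu hku]].
    destruct (h_cof a' u) as [p [z [hup hz]]].
    assert (hip : le i p) by (eapply h_trans; eauto).
    assert (hkp : le k p) by (eapply h_trans; eauto).
    exists p. split; [auto|split;[auto|]]. exists z. split.
    + apply (Hst i p hip z a b). eapply h_B; eauto. apply h_A; auto.
    + eapply h_B; eauto.
  - contradiction.
  - intros h1 h2. subst. apply h_top; auto.
Qed.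

Lemma h_share emb (Hdir : direct_wrt le R emb) (Hext : extensional le R RT) :
  forall c d i (a : M i), RT i c a -> RT i d a -> c = d.
Proof.
  intros c d i a hc hd. destruct Hdir as (_&_&Hcoh&Hd).
  apply Hext. intros k l x y hx hy. unfold Ext in *.
  destruct (h_upper k l) as [u0 [hk0 hl0]].
  destruct (h_upper u0 i) as [u [h0u hiu]].
  destruct (h_cof c u) as [p [z [hup hz]]].
  destruct (h_cof d p) as [q [w [hpq hw]]].
  pose proof (h_trans _ _ _ (h_trans _ _ _ hk0 h0u) hup) as hkp.
  pose proof (h_trans _ _ _ hiu hup) as hip.
  pose proof (h_trans _ _ _ (h_trans _ _ _ (h_trans _ _ _ hl0 h0u) hup) hpq) as hlq.
  pose proof (h_trans _ _ _ hkp hpq) as hkq.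
  pose proof (h_trans _ _ _ hip hpq) as hiq.
  set (e := emb p q hpq z).
  assert (hex : R q k e x) by (eapply Hcoh; eauto; eapply h_B; eauto).
  assert (hea : R q i e a) by (eapply Hcoh; eauto; eapply h_B; eauto).
  assert (hwa : R q i w a) by (eapply h_B; eauto).
  assert (hwy : R q l w y) by (eapply h_B; eauto).
  apply (Hd i q hiq) in hea. apply (Hd i q hiq) in hwa.
  apply (Hpre q q (h_refl q)) in hea. apply (Hpre q q (h_refl q)) in hwa.
  assert (hwe : R q q w e) by (eapply h_tr; [exact hwa| apply h_sym; exact hea]).
  exists q. split; [auto|split;[auto|]]. exists e. split; auto.
  apply (Hpre l q hlq). exists q. split; [apply h_refl|split;[auto|]].
  exists w. auto.
Qed.


Lemma h_part2 emb Emb (Hdir : direct_wrt le R emb) (Htemb : target_emb le R RT emb Emb)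
  (Hext : extensional le R RT) :
  direct_wrt (le_bar le) (R_bar R RT) (emb_bar le emb Emb) /\
  (forall a : T, exists S : Idx -> Prop,
     (exists i, S i) /\ upward_closed le S /\ (forall i, S i -> I_of RT a i)).
Proof.
  pose proof (h_share emb Hdir Hext) as Hsh.
  destruct Htemb as [Hbemb Hbcoh].
  assert (HEa : forall i (a : M i), RT i (Emb i a) a).
  { intros i a. exact (Hbcoh (Some i) (Some i) None (h_refl i) Logic.I a a (Hsys i a)). }
  destruct Hdir as (Hp & He & Hcoh & Hd).
  split.
  - split; [apply Htar|split;[exact Hbemb|split;[exact Hbcoh|]]].
    intros j j' h a' a. destruct j as [i|]; destruct j' as [i'|]; simpl in *.
    + split; intro H.
      * apply h_A'. apply (proj1 (Hd i i' h a' a)); auto.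
      * apply (proj2 (Hd i i' h a' a)). exact (h_A _ _ _ _ H).
    + split; intro H.
      * rewrite (Hsh a' (Emb i a) i a H (HEa i a)). apply h_top'.
      * apply h_top in H. rewrite H. apply HEa.
    + contradiction.
    + split; intro H.
      * subst. apply h_top'.
      * apply h_top in H. auto.
  - intros a. destruct HI as (_&_&[i0]&_).
    destruct (h_cof a i0) as [i [x [_ hx]]].
    exists (fun j => le i j). split; [exists i; apply h_refl|split].
    + intros j k h1 h2. eapply h_trans; eauto.
    + intros j hij. exists (emb i j hij x).
      assert (hr : R j i (emb i j hij x) x).
      { apply (proj2 (Hd i j hij _ x)). exists j. split; [apply h_refl|split;[apply h_refl|]].
        exists (emb i j hij x). split; apply Hsys. }
      pose proof (Hbcoh (Some i) (Some j) None hij Logic.I _ _ hr) as h2. simpl in h2.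
      rewrite (Hsh a (Emb j (emb i j hij x)) i x hx h2). apply HEa.
Qed.

Lemma h_part3 proj Proj (Hinv : inverse_wrt le R proj) (Htp : target_proj le R RT proj Proj)
  (Hmax : maximal le R RT F) :
  inverse_wrt (le_bar le) (R_bar R RT) (proj_bar le proj Proj) /\
  (forall (a : T) (i : Idx), I_of RT a i).
Proof.
  destruct Htp as [Hbp Hbcoh].
  destruct Hinv as (Hp & Hpr & Hcoh & Hd).
  assert (Hback : forall (c : T) i (a : M i), R i i (Proj i c) a -> RT i c a).
  { intros c i a h. apply (h_max_add Hmax). intros k x hx.
    destruct (h_upper i k) as [m [him hkm]].
    pose proof (Hbcoh (Some k) (Some m) None hkm Logic.I c x hx) as hcx. simpl in hcx.
    exists m. split; [auto|split;[auto|]]. exists (Proj m c). split; auto.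
    apply (proj2 (Hd i m him _ a)).
    destruct Hbp as (_&_&H3).
    pose proof (H3 (Some i) (Some m) None him Logic.I Logic.I c) as h3. simpl in h3.
    apply h_A in h3. apply (Hpre i i (h_refl i)) in h3.
    apply (Hpre i i (h_refl i)). eapply h_tr; eauto. }
  split.
  - split; [apply Htar|split;[exact Hbp|split;[exact Hbcoh|]]].
    intros j j' h a' a. destruct j as [i|]; destruct j' as [i'|]; simpl in *.
    + split; intro H.
      * apply h_A'. apply (proj1 (Hd i i' h a' a)); auto.
      * apply (proj2 (Hd i i' h a' a)). exact (h_A _ _ _ _ H).
    + split; intro H.
      * apply h_A'. apply (Hpre i i (h_refl i)).
        exact (Hbcoh (Some i) (Some i) None (h_refl i) Logic.I a' a H).
      * apply Hback. apply (Hpre i i (h_refl i)). apply h_A; auto.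
    + contradiction.
    + split; intro H.
      * subst. apply h_top'.
      * apply h_top in H. auto.
  - intros a i. exists (Proj i a). apply Hback. apply Hsys.
Qed.

End H.

Theorem proposition2p11 (I : Type) (le : I -> I -> Prop) (F : (I -> Prop) -> Prop)
  (M : I -> Type) (R : forall i' i, M i' -> M i -> Prop)
  (T : Type) (RT : forall i, T -> M i -> Prop) :
  index_setting le F ->
  is_system R -> prefactor le R ->
  is_target le R RT F ->
  (* (1) *)
  (stable le R -> maximal le R RT F ->
     stable (le_bar le) (R_bar R RT)) /\
  (* (2) *)
  (forall (emb : forall i i', le i i' -> M i -> M i') (Emb : forall i, M i -> T),
     direct_wrt le R emb -> target_emb le R RT emb Emb -> extensional le R RT ->
     direct_wrt (le_bar le) (R_bar R RT) (emb_bar le emb Emb) /\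
     (forall a : T, exists S : I -> Prop,
        (exists i, S i) /\ upward_closed le S /\ (forall i, S i -> I_of RT a i))) /\
  (* (3) *)
  (forall (proj : forall i i', le i i' -> M i' -> M i) (Proj : forall i, T -> M i),
     inverse_wrt le R proj -> target_proj le R RT proj Proj -> maximal le R RT F ->
     inverse_wrt (le_bar le) (R_bar R RT) (proj_bar le proj Proj) /\
     (forall (a : T) (i : I), I_of RT a i)).
Proof.
  intros HI Hsys Hpre Htar. split; [|split].
  - intros Hst Hmax. exact (h_stable I le F M R T RT HI Hsys Hpre Htar Hst Hmax).
  - intros emb Emb Hd Ht He. exact (h_part2 I le F M R T RT HI Hsys Hpre Htar emb Emb Hd Ht He).
  - intros proj Proj Hi Ht Hm. exact (h_part3 I le F M R T RT HI Hsys Hpre Htar proj Proj Hi Ht Hm).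
Qed.
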